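(* Let $S$ be a finitely generated cancellative semigroup which cannot be embedded in a group. Then $|\Omega S|=2^{\aleph_0}$.
   Context: $S$ is cancellative if both $ax=ay\Rightarrow x=y$ and $xa=ya\Rightarrow x=y$ for all $a,x,y\in S$. A digraph on $\Omega$ is a subset $\Gamma\subseteq\Omega\times\Omega$. A path is a sequence of pairwise distinct vertices $(v_0,v_1,\ldots)$ with $(v_i,v_{i+1})\in\Gamma$ (length 0 allowed); a ray is an infinite path; an anti-ray is an infinite sequence of distinct vertices with $(v_{i+1},v_i)\in\Gamma$. For infinite $\Sigma',\Sigma\subseteq\Omega$, $\Sigma'\preccurlyeq\Sigma$ means there are infinitely many pairwise vertex-disjoint paths from vertices of $\Sigma'$ to vertices of $\Sigma$. On rays and anti-rays $\preccurlyeq$ is a preorder with associated equivalence $\approx$; the ends are the $\approx$-classes of rays and anti-rays, and $\Omega\Gamma$ is the poset of ends. The right Cayley graph $\Gamma_r(S,A)$ has vertex set $S$ and edges $(x,xa)$, $x\in S$, $a\in A$. For finitely generated $S$, $\Omega S:=\Omega\Gamma_r(S,A)$ for any finite generating set $A$ (well defined up to isomorphism). *)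

(* Defs.v *)
From Stdlib Require Import List.
Import ListNotations.
Set Implicit Arguments.

Section Defs.
Variable T : Type.

Definition associative (op : T -> T -> T) : Prop :=
  forall x y z, op x (op y z) = op (op x y) z.

Definition cancellative (op : T -> T -> T) : Prop :=
  (forall a x y, op a x = op a y -> x = y) /\
  (forall a x y, op x a = op y a -> x = y).

Inductive generated (op : T -> T -> T) (A : list T) : T -> Prop :=
| gen_base : forall a, In a A -> generated op A a
| gen_op : forall x y, generated op A x -> generated op A y -> generated op A (op x y).

Definition generates (op : T -> T -> T) (A : list T) : Prop :=
  forall x, generated op A x.

Definition finitely_generated (op : T -> T -> T) : Prop :=
  exists A : list T, generates op A.

Fixpoint chain (edge : T -> T -> Prop) (p : list T) : Prop :=
  match p with
  | x :: ((y :: _) as q) => edge x y /\ chain edge q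
  | _ => True
  end.

Definition is_path (edge : T -> T -> Prop) (p : list T) : Prop :=
  p <> [] /\ NoDup p /\ chain edge p.

Definition path_from_to (edge : T -> T -> Prop) (X Y : T -> Prop) (p : list T) : Prop :=
  is_path edge p /\
  match p with
  | [] => False
  | x :: _ => X x /\ Y (last p x)
  end.

Definition preceq (edge : T -> T -> Prop) (X Y : T -> Prop) : Prop :=
  exists P : nat -> list T,
    (forall n, path_from_to edge X Y (P n)) /\
    (forall m n, m <> n -> forall v, In v (P m) -> In v (P n) -> False).

Definition injective_seq (f : nat -> T) : Prop :=
  forall i j, f i = f j -> i = j.

Definition is_ray (edge : T -> T -> Prop) (f : nat -> T) : Prop :=
  injective_seq f /\ forall i, edge (f i) (f (Datatypes.S i)).

Definition is_anti_ray (edge : T -> T -> Prop) (f : nat -> T) : Prop :=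
  injective_seq f /\ forall i, edge (f (Datatypes.S i)) (f i).

Definition ray_or_antiray (edge : T -> T -> Prop) (r : bool * (nat -> T)) : Prop :=
  if fst r then is_ray edge (snd r) else is_anti_ray edge (snd r).

Definition image (f : nat -> T) : T -> Prop := fun v => exists i, f i = v.

Definition end_equiv (edge : T -> T -> Prop) (r r' : bool * (nat -> T)) : Prop :=
  preceq edge (image (snd r)) (image (snd r')) /\
  preceq edge (image (snd r')) (image (snd r)).

(* |Ω Γ| = 2^aleph_0 : the ≈-classes of rays and anti-rays are in bijection
   with the Cantor space nat -> bool (F induces a bijection on the quotient). *)
Definition ends_card_continuum (edge : T -> T -> Prop) : Prop :=
  exists F : bool * (nat -> T) -> (nat -> bool),
    (forall c : nat -> bool, exists r, ray_or_antiray edge r /\ F r = c) /\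
    (forall r r', ray_or_antiray edge r -> ray_or_antiray edge r' ->
        (F r = F r' <-> end_equiv edge r r')).

Definition cayley_edge (op : T -> T -> T) (A : list T) (x y : T) : Prop :=
  exists a, In a A /\ y = op x a.

End Defs.

Definition is_group (G : Type) (m : G -> G -> G) (e : G) (i : G -> G) : Prop :=
  associative m /\ (forall x, m e x = x /\ m x e = x) /\
  (forall x, m (i x) x = e /\ m x (i x) = e).

Definition embeds_in_group (S : Type) (op : S -> S -> S) : Prop :=
  exists (G : Type) (m : G -> G -> G) (e : G) (i : G -> G),
    is_group m e i /\
    exists phi : S -> G,
      (forall x y, phi x = phi y -> x = y) /\
      (forall x y, phi (op x y) = m (phi x) (phi y)).

(* Main.v *)
Require Import Defs.
From Stdlib Require Import List Arith Lia Classical ClassicalEpsilon FunctionalExtensionality PropExtensionality ProofIrrelevance FinFun Cantor.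
Import ListNotations.

Module PathsM.

Section Paths.
Variable T : Type.
Variable e : T -> T -> Prop.

Definition e' (u v : T) : Prop := e u v \/ u = v.

Lemma chain_tl (R : T -> T -> Prop) a l : chain R (a :: l) -> chain R l.
Proof. destruct l; simpl; tauto. Qed.

Lemma chain_suffix (R : T -> T -> Prop) l1 l2 : chain R (l1 ++ l2) -> chain R l2.
Proof.
  induction l1; simpl; auto. intro H. apply IHl1. eapply chain_tl; exact H.
Qed.

Lemma chain_mono (R R' : T -> T -> Prop) l : (forall u v, R u v -> R' u v) -> chain R l -> chain R' l.
Proof.
  intro HR; induction l as [|a l IH]; simpl; auto.
  destruct l; auto. intros [H1 H2]; split; auto.
Qed.

Lemma last_default (l : list T) (x d d' : T) : last (x :: l) d = last (x :: l) d'.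
Proof.
  revert x; induction l as [|b l IH]; intro x; [reflexivity|].
  change (last (b :: l) d = last (b :: l) d'). apply IH.
Qed.

Lemma last_app_ne (l1 l : list T) (d : T) : l <> [] -> last (l1 ++ l) d = last l d.
Proof.
  intro Hl; induction l1 as [|a l1 IH]; simpl; auto.
  rewrite <- IH. assert (Hn : l1 ++ l <> []).
  { intro E; apply app_eq_nil in E; tauto. }
  clear IH. destruct (l1 ++ l); [contradiction|reflexivity].
Qed.

Lemma chain_app (R : T -> T -> Prop) x l1 y l2 :
  chain R (x :: l1) -> chain R (y :: l2) -> R (last (x :: l1) x) y ->
  chain R ((x :: l1) ++ (y :: l2)).
Proof.
  revert x; induction l1 as [|a l1 IH]; intros x H1 H2 H3.
  - change (R x y /\ chain R (y :: l2)). split; auto.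
  - destruct H1 as [Hxa H1].
    change (R x a /\ chain R ((a :: l1) ++ y :: l2)). split; auto.
    apply IH; auto. change (R (last (a :: l1) x) y) in H3.
    rewrite (last_default l1 a a x). exact H3.
Qed.

Lemma last_In (x : T) (l : list T) : In (last (x :: l) x) (x :: l).
Proof.
  revert x; induction l as [|a l IH]; intro x; [left; reflexivity|].
  change (In (last (a :: l) x) (x :: a :: l)).
  right. rewrite (last_default l a x a). apply IH.
Qed.

Lemma w2p : forall w x, chain e' (x :: w) ->
  exists p, NoDup (x :: p) /\ chain e (x :: p) /\
    last (x :: p) x = last (x :: w) x /\ incl (x :: p) (x :: w).
Proof.
  induction w as [|y w IH]; intros x H.
  - exists []; repeat split; auto. constructor; auto; constructor. apply incl_refl.
  - simpl in H. destruct H as [Hxy H].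
    destruct (IH y H) as [p' [HN [HC [HL HI]]]].
    destruct (classic (In x (y :: p'))) as [Hin|Hnin].
    + destruct (in_split _ _ Hin) as [l1 [l2 E]].
      exists l2. split; [|split; [|split]].
      * rewrite E in HN. eapply NoDup_app_remove_l; exact HN.
      * rewrite E in HC. eapply chain_suffix; exact HC.
      * change (last (x :: y :: w) x) with (last (y :: w) x).
        rewrite (last_default w y x y), <- HL, E.
        rewrite last_app_ne; [|discriminate]. apply last_default.
      * intros v Hv. right. apply HI. rewrite E. apply in_or_app; right; exact Hv.
    + exists (y :: p'). split; [|split; [|split]].
      * constructor; auto.
      * change (e x y /\ chain e (y :: p')). split; [|exact HC]. destruct Hxy as [Hxy|Hxy]; auto.
        subst; exfalso; apply Hnin; left; auto.
      * change (last (x :: y :: p') x) with (last (y :: p') x).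
        change (last (x :: y :: w) x) with (last (y :: w) x).
        rewrite (last_default p' y x y), (last_default w y x y); auto.
      * intros v [Hv|Hv]; [left; auto|right; apply HI; auto].
Qed.

Lemma avoid (P : nat -> list T) :
  (forall m n, m <> n -> forall v, In v (P m) -> In v (P n) -> False) ->
  forall L, exists n, forall v, In v (P n) -> ~ In v L.
Proof.
  intros HD L. apply NNPP; intro Hn.
  assert (H : forall n, exists v, In v (P n) /\ In v L).
  { intro n. apply NNPP; intro H. apply Hn. exists n. intros v H1 H2.
    apply H; exists v; auto. }
  set (g := fun n => proj1_sig (constructive_indefinite_description _ (H n))).
  assert (Hg : forall n, In (g n) (P n) /\ In (g n) L).
  { intro n; unfold g; destruct (constructive_indefinite_description _ (H n)); auto. }
  assert (Hinj : Injective g).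
  { intros m n E. destruct (Nat.eq_dec m n) as [|Hne]; auto. exfalso.
    apply (HD m n Hne (g m)); [apply Hg|]. rewrite E; apply Hg. }
  assert (HN : NoDup (map g (seq 0 (S (length L))))).
  { apply Injective_map_NoDup; auto. apply seq_NoDup. }
  assert (HI : incl (map g (seq 0 (S (length L)))) L).
  { intros v Hv. apply in_map_iff in Hv. destruct Hv as [n [<- _]]. apply Hg. }
  pose proof (NoDup_incl_length HN HI) as Hlen.
  rewrite length_map, length_seq in Hlen. lia.
Qed.

Lemma preceq_of_avoid (X Y : T -> Prop) :
  (forall L, exists p, path_from_to e X Y p /\ forall v, In v p -> ~ In v L) ->
  preceq e X Y.
Proof.
  intro H.
  set (f := fun L => proj1_sig (constructive_indefinite_description _ (H L))).
  assert (Hf : forall L, path_from_to e X Y (f L) /\ forall v, In v (f L) -> ~ In v L).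
  { intro L; unfold f; destruct (constructive_indefinite_description _ (H L)); auto. }
  set (acc := fix acc n := match n with 0 => [] | S n => acc n ++ f (acc n) end).
  assert (Hacc : forall m n, m < n -> incl (f (acc m)) (acc n)).
  { intros m n; induction n as [|n IH]; intro Hmn; [lia|].
    simpl. intros v Hv. apply in_or_app.
    destruct (Nat.eq_dec m n) as [->|Hne]; [right; auto|].
    left; apply IH; auto; lia. }
  exists (fun n => f (acc n)); split.
  - intro n; apply Hf.
  - intros m n Hmn v H1 H2.
    destruct (Nat.lt_gt_cases m n) as [[Hlt|Hlt] _]; auto.
    + apply (proj2 (Hf (acc n)) v H2). apply (Hacc m n Hlt); auto.
    + apply (proj2 (Hf (acc m)) v H1). apply (Hacc n m Hlt); auto.
Qed.

Lemma tail_bound (y : nat -> T) : injective_seq y ->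
  forall L, exists K, forall k, K <= k -> ~ In (y k) L.
Proof.
  intros Hy L; induction L as [|v L [K IH]].
  - exists 0; simpl; auto.
  - destruct (classic (exists i, y i = v)) as [[i Hi]|Hn].
    + exists (max K (S i)). intros k Hk [E|E].
      * subst. apply Hy in E. lia.
      * apply (IH k); auto; lia.
    + exists K. intros k Hk [E|E]; [apply Hn; eauto| apply (IH k); auto].
Qed.

Fixpoint su (y : nat -> T) (j n : nat) : list T :=
  match n with 0 => [y j] | S n => y j :: su y (S j) n end.
Fixpoint sd (y : nat -> T) (j n : nat) : list T :=
  match n with 0 => [y j] | S n => y (j + S n) :: sd y j n end.

Lemma su_hd y j n : exists l, su y j n = y j :: l.
Proof. destruct n; simpl; eauto. Qed.
Lemma sd_hd y j n : exists l, sd y j n = y (j + n) :: l.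
Proof. destruct n; simpl; eauto. rewrite Nat.add_0_r; eauto. Qed.

Lemma su_last y j n d : last (su y j n) d = y (j + n).
Proof.
  revert j; induction n as [|n IH]; intro j; simpl.
  - rewrite Nat.add_0_r; auto.
  - destruct (su_hd y (S j) n) as [l E]. rewrite E. rewrite <- E, IH.
    f_equal; lia.
Qed.
Lemma sd_last y j n d : last (sd y j n) d = y j.
Proof.
  induction n as [|n IH]; simpl; auto.
  destruct (sd_hd y j n) as [l E]. rewrite E. rewrite <- E, IH. auto.
Qed.

Lemma su_chain y j n : (forall k, e (y k) (y (S k))) -> chain e' (su y j n).
Proof.
  intro Hy; revert j; induction n as [|n IH]; intro j; simpl; auto.
  destruct (su_hd y (S j) n) as [l E]. rewrite E. split; [left; apply Hy|].
  rewrite <- E; apply IH.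
Qed.
Lemma sd_chain y j n : (forall k, e (y (S k)) (y k)) -> chain e' (sd y j n).
Proof.
  intro Hy; induction n as [|n IH]; simpl; auto.
  destruct (sd_hd y j n) as [l E]. rewrite E. split.
  - left. replace (j + S n) with (S (j + n)) by lia. apply Hy.
  - rewrite <- E; apply IH.
Qed.

Lemma su_In y j n v : In v (su y j n) -> exists k, j <= k /\ v = y k.
Proof.
  revert j; induction n as [|n IH]; intros j H; simpl in H.
  - destruct H as [H|[]]; exists j; auto.
  - destruct H as [H|H]; [exists j; auto|].
    destruct (IH _ H) as [k [Hk ->]]; exists k; split; auto; lia.
Qed.
Lemma sd_In y j n v : In v (sd y j n) -> exists k, j <= k /\ v = y k.
Proof.
  induction n as [|n IH]; intros H; simpl in H.
  - destruct H as [H|[]]; exists j; auto.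
  - destruct H as [H|H]; [exists (j + S n); split; auto; lia|auto].
Qed.

Lemma combine (X Z : T -> Prop) (L : list T) x p s0 s z q :
  X x -> Z (last (z :: q) z) ->
  chain e (x :: p) -> chain e' (s0 :: s) -> chain e (z :: q) ->
  last (x :: p) x = s0 -> last (s0 :: s) s0 = z ->
  (forall v, In v ((x :: p) ++ (s0 :: s) ++ (z :: q)) -> ~ In v L) ->
  exists r, path_from_to e X Z r /\ forall v, In v r -> ~ In v L.
Proof.
  intros HX HZ H1 H2 H3 E1 E2 HL.
  assert (HC : chain e' (x :: (p ++ (s0 :: s) ++ (z :: q)))).
  { change (x :: p ++ (s0 :: s) ++ z :: q) with ((x :: p) ++ (s0 :: s) ++ z :: q).
    apply chain_app; [apply chain_mono with e; [left; auto|auto]| |right; auto].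
    apply chain_app; [auto|apply chain_mono with e; [left; auto|auto]|].
    right; auto. }
  destruct (w2p _ _ HC) as [r [HN [HCr [HLr HIr]]]].
  exists (x :: r); split.
  - split; [split; [discriminate|split; auto]|].
    split; auto. rewrite HLr.
    change (last (x :: p ++ (s0 :: s) ++ z :: q) x) with (last ((x :: p) ++ (s0 :: s) ++ z :: q) x).
    rewrite last_app_ne; [|destruct s; discriminate].
    rewrite last_app_ne; [|discriminate]. rewrite (last_default q z x z). exact HZ.
  - intros v Hv. apply HL. apply HIr; auto.
Qed.

Lemma preceq_trans_ray (X Z : T -> Prop) (y : nat -> T) :
  is_ray e y \/ is_anti_ray e y ->
  preceq e X (image y) -> preceq e (image y) Z -> preceq e X Z.
Proof.
  intros Hy [P [HP HPd]] [Q [HQ HQd]].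
  assert (Hinj : injective_seq y) by (destruct Hy as [[H _]|[H _]]; auto).
  apply preceq_of_avoid; intro L.
  destruct (tail_bound y Hinj L) as [K HK].
  destruct Hy as [[_ Hy]|[_ Hy]].
  - destruct (avoid P HPd (L ++ map y (seq 0 K))) as [n Hn].
    destruct (HP n) as [[_ [_ HCp]] Hp]. destruct (P n) as [|x p] eqn:EP; [contradiction|].
    destruct Hp as [HX [j Hj]].
    assert (HjK : K <= j).
    { destruct (le_lt_dec K j); auto. exfalso.
      apply (Hn (y j)); [rewrite Hj; apply last_In|].
      apply in_or_app; right. apply in_map. apply in_seq; lia. }
    destruct (avoid Q HQd (L ++ map y (seq 0 (S j)))) as [l Hl].
    destruct (HQ l) as [[_ [_ HCq]] Hq]. destruct (Q l) as [|z q] eqn:EQ; [contradiction|].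
    destruct Hq as [[j' Hj'] HZ].
    assert (Hjj : S j <= j').
    { destruct (le_lt_dec (S j) j'); auto. exfalso.
      apply (Hl z); [left; auto|].
      apply in_or_app; right. rewrite <- Hj'. apply in_map. apply in_seq; lia. }
    destruct (su_hd y j (j' - j)) as [s Es].
    apply (combine X Z L x p (y j) s z q); auto.
    + rewrite <- Es. apply su_chain; auto.
    + rewrite <- Es, su_last. rewrite <- Hj'. f_equal; lia.
    + intros v Hv. apply in_app_or in Hv. destruct Hv as [Hv|Hv].
      * intro Hv'. apply (Hn v Hv). apply in_or_app; auto.
      * apply in_app_or in Hv. destruct Hv as [Hv|Hv].
        -- rewrite <- Es in Hv. destruct (su_In _ _ _ _ Hv) as [k [Hk ->]].
           apply HK; lia.
        -- intro Hv'. apply (Hl v Hv). apply in_or_app; auto.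
  - destruct (avoid Q HQd (L ++ map y (seq 0 K))) as [l Hl].
    destruct (HQ l) as [[_ [_ HCq]] Hq]. destruct (Q l) as [|z q] eqn:EQ; [contradiction|].
    destruct Hq as [[j' Hj'] HZ].
    assert (Hjj : K <= j').
    { destruct (le_lt_dec K j'); auto. exfalso.
      apply (Hl z); [left; auto|].
      apply in_or_app; right. rewrite <- Hj'. apply in_map. apply in_seq; lia. }
    destruct (avoid P HPd (L ++ map y (seq 0 j'))) as [n Hn].
    destruct (HP n) as [[_ [_ HCp]] Hp]. destruct (P n) as [|x p] eqn:EP; [contradiction|].
    destruct Hp as [HX [j Hj]].
    assert (HjK : j' <= j).
    { destruct (le_lt_dec j' j); auto. exfalso.
      apply (Hn (y j)); [rewrite Hj; apply last_In|].
      apply in_or_app; right. apply in_map. apply in_seq; lia. }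
    destruct (sd_hd y j' (j - j')) as [s Es].
    apply (combine X Z L x p (y (j' + (j - j'))) s z q); auto.
    + rewrite <- Es. apply sd_chain; auto.
    + rewrite <- Hj. f_equal; lia.
    + rewrite <- Es, sd_last. auto.
    + intros v Hv. apply in_app_or in Hv. destruct Hv as [Hv|Hv].
      * intro Hv'. apply (Hn v Hv). apply in_or_app; auto.
      * apply in_app_or in Hv. destruct Hv as [Hv|Hv].
        -- rewrite <- Es in Hv. destruct (sd_In _ _ _ _ Hv) as [k [Hk ->]].
           apply HK; lia.
        -- intro Hv'. apply (Hl v Hv). apply in_or_app; auto.
Qed.

Lemma preceq_refl_ray (y : nat -> T) : injective_seq y -> preceq e (image y) (image y).
Proof.
  intro Hy. exists (fun n => [y n]); split.
  - intro n. split; [split; [discriminate|split; [constructor; auto; constructor|exact I]]|].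
    split; exists n; auto.
  - intros m n Hmn v [H1|[]] [H2|[]]. apply Hmn, Hy. congruence.
Qed.

End Paths.

End PathsM.
Import PathsM.

Module RaysM.

Lemma divmod_help (k L j : nat) : j < L -> (k * L + j) / L = k /\ (k * L + j) mod L = j.
Proof.
  intro H. assert (Hd : (k * L + j) / L = k).
  { rewrite Nat.div_add_l by lia. rewrite Nat.div_small by auto. lia. }
  split; auto. pose proof (Nat.div_mod_eq (k * L + j) L) as E.
  rewrite Hd in E. lia.
Qed.

Lemma firstn_S_nth {X : Type} (w : list X) j d : j < length w ->
  firstn (S j) w = firstn j w ++ [nth j w d].
Proof.
  revert j; induction w as [|a w IH]; intros j H; simpl in H; [lia|].
  destruct j; [reflexivity|]. simpl. f_equal. apply IH; lia.
Qed.

Lemma max_exists (P : nat -> Prop) B n : P n -> (forall m, P m -> m < B) ->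
  exists m, P m /\ forall m', P m' -> m' <= m.
Proof.
  revert n; induction B as [|B IH]; intros n Hn HB.
  - specialize (HB n Hn); lia.
  - destruct (classic (P B)) as [HPB|HPB].
    + exists B; split; auto. intros m' Hm'. specialize (HB m' Hm'); lia.
    + apply (IH n Hn). intros m Hm. specialize (HB m Hm).
      destruct (Nat.eq_dec m B); [subst; contradiction|lia].
Qed.

Lemma min_exists (P : nat -> Prop) n : P n -> exists k, P k /\ forall i, i < k -> ~ P i.
Proof.
  revert P; induction n as [n IH] using lt_wf_ind; intros P Hn.
  destruct (classic (exists i, i < n /\ P i)) as [[i [Hi HPi]]|Hno].
  - exact (IH i Hi P HPi).
  - exists n; split; auto. intros i Hi HPi; apply Hno; eauto.
Qed.

Section Rays.
Variable Sg : Type.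
Variable op : Sg -> Sg -> Sg.
Hypothesis Hassoc : associative op.
Hypothesis Hcanc : cancellative op.
Variable A : list Sg.
Variables (u1 u2 : Sg) (t1 t2 : list Sg).
Hypothesis Hu1 : In u1 A.
Hypothesis Hu2 : In u2 A.
Hypothesis Ht1 : forall g, In g t1 -> In g A.
Hypothesis Ht2 : forall g, In g t2 -> In g A.
Hypothesis Hlen : length t1 = length t2.
Definition X1 := fold_left op t1 u1.
Definition X2 := fold_left op t2 u2.
Hypothesis Hdis : forall s t, op X1 s <> op X2 t.

Let lc : forall a x y, op a x = op a y -> x = y := proj1 Hcanc.
Let rc : forall a x y, op x a = op y a -> x = y := proj2 Hcanc.

Definition L := S (length t1).
Definition BW (b : bool) := if b then u1 :: t1 else u2 :: t2.
Definition XV (b : bool) := if b then X1 else X2.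

Lemma BW_len b : length (BW b) = L.
Proof. destruct b; simpl; unfold L; auto. Qed.

Lemma BW_A b g : In g (BW b) -> In g A.
Proof. destruct b; intros [->|H]; auto. Qed.

Definition gen (c : nat -> bool) (n : nat) : Sg :=
  match n with 0 => u1 | S m => nth (m mod L) (BW (c (m / L))) u1 end.

Lemma gen_S c m : gen c (S m) = nth (m mod L) (BW (c (m / L))) u1.
Proof. reflexivity. Qed.

Fixpoint W (c : nat -> bool) (n : nat) : Sg :=
  match n with 0 => u1 | S m => op (W c m) (gen c (S m)) end.

Lemma W_S c m : W c (S m) = op (W c m) (gen c (S m)).
Proof. reflexivity. Qed.

Lemma fold_op w : forall z g, fold_left op w (op z g) = op z (fold_left op w g).
Proof.
  induction w as [|a w IH]; intros z g; simpl; auto.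
  rewrite <- Hassoc. apply IH.
Qed.

Lemma W_edge c n : cayley_edge op A (W c n) (W c (S n)).
Proof.
  exists (gen c (S n)); split; [|reflexivity]. unfold gen.
  apply (BW_A (c (n / L))). apply nth_In. rewrite BW_len.
  apply Nat.mod_upper_bound. unfold L; lia.
Qed.

Lemma W_block c k j : j <= L -> W c (k * L + j) = fold_left op (firstn j (BW (c k))) (W c (k * L)).
Proof.
  induction j as [|j IH]; intro Hj.
  - rewrite Nat.add_0_r; reflexivity.
  - replace (k * L + S j) with (S (k * L + j)) by lia. rewrite W_S.
    rewrite IH by lia. rewrite gen_S.
    destruct (divmod_help k L j ltac:(lia)) as [E1 E2]. rewrite E1, E2.
    rewrite (firstn_S_nth _ j u1) by (rewrite BW_len; lia).
    rewrite fold_left_app. reflexivity.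
Qed.

Lemma W_blockend c k : W c (k * L + L) = op (W c (k * L)) (XV (c k)).
Proof.
  rewrite W_block by lia. rewrite <- (BW_len (c k)), firstn_all.
  destruct (c k); simpl; apply fold_op.
Qed.

Lemma W_ext c m n : m < n -> exists s, W c n = op (W c m) s.
Proof.
  induction n as [|n IH]; intro H; [lia|].
  destruct (Nat.eq_dec m n) as [->|Hne].
  - exists (gen c (S n)); reflexivity.
  - destruct IH as [s Hs]; [lia|]. exists (op s (gen c (S n))).
    rewrite W_S, Hs, Hassoc; reflexivity.
Qed.

Lemma W_cone c k m : S k * L + 1 <= m ->
  exists s, W c m = op (op (W c (k * L)) (XV (c k))) s.
Proof.
  intro H. rewrite Nat.mul_succ_l in H. destruct (W_ext c (k * L + L) m) as [s Hs]; [lia|].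
  exists s. rewrite Hs, W_blockend; auto.
Qed.

Lemma W_agree c c' k : (forall i, i < k -> c i = c' i) ->
  forall n, n <= k * L -> W c n = W c' n.
Proof.
  intros Hc n; induction n as [|n IH]; intro Hn; auto.
  rewrite !W_S, IH by lia. rewrite !gen_S. rewrite Hc; auto.
  apply Nat.Div0.div_lt_upper_bound. lia.
Qed.

Lemma no_unit_gen X Y : (forall s t, op X s <> op Y t) ->
  forall x t s, x = op x (op (op t X) s) -> False.
Proof.
  intros HXY x t s Hx. set (y := op (op t X) s) in *.
  assert (H1 : forall z, op y z = z).
  { intro z. apply (lc x). rewrite Hassoc, <- Hx; reflexivity. }
  assert (H2 : forall z, op z y = z).
  { intro z. apply (rc y). rewrite <- Hassoc, H1; reflexivity. }
  assert (H3 : op (op X s) t = y).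
  { apply (lc t). rewrite H2.
    transitivity (op (op (op t X) s) t); [rewrite !Hassoc; reflexivity|].
    fold y. apply H1. }
  apply (HXY (op (op s t) Y) y).
  rewrite H2, !Hassoc, H3. apply H1.
Qed.

Lemma XV_dis b b' : b <> b' -> forall s t, op (XV b) s <> op (XV b') t.
Proof.
  destruct b, b'; simpl; intros Hb s t; try (exfalso; apply Hb; reflexivity).
  - apply Hdis.
  - intro E. apply (Hdis t s). auto.
Qed.

Lemma no_unit b x t s : x = op x (op (op t (XV b)) s) -> False.
Proof.
  apply no_unit_gen with (Y := XV (negb b)). apply XV_dis. destruct b; discriminate.
Qed.

Lemma W_finite c n m : W c m = W c n -> m < (S (S n)) * L + 1.
Proof.
  intro E. destruct (le_lt_dec (S (S n) * L + 1) m) as [H|H]; auto. exfalso.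
  destruct (W_cone c (S n) m H) as [s Hs].
  destruct (W_ext c n (S n * L)) as [t Ht]; [unfold L; simpl; lia|].
  apply (no_unit (c (S n)) (W c n) t s).
  rewrite <- E at 1. rewrite Hs, Ht, !Hassoc. reflexivity.
Qed.

Definition lst (c : nat -> bool) (n : nat) : nat :=
  proj1_sig (constructive_indefinite_description _
    (max_exists (fun m => W c m = W c n) _ n eq_refl (fun m Hm => W_finite c n m Hm))).

Lemma lst_spec c n : W c (lst c n) = W c n /\ forall m', W c m' = W c n -> m' <= lst c n.
Proof.
  unfold lst. destruct (constructive_indefinite_description _ _) as [m Hm]. exact Hm.
Qed.

Fixpoint idx (c : nat -> bool) (k : nat) : nat :=
  match k with 0 => lst c 0 | S k => lst c (S (idx c k)) end.

Definition R (c : nat -> bool) (k : nat) : Sg := W c (idx c k).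

Lemma idx_lst c k : exists n, idx c k = lst c n.
Proof. destruct k; simpl; eauto. Qed.

Lemma idx_S c k : idx c k < idx c (S k).
Proof.
  simpl. destruct (lst_spec c (S (idx c k))) as [_ H]. specialize (H _ eq_refl). lia.
Qed.

Lemma idx_mono c i j : i < j -> idx c i < idx c j.
Proof.
  induction j as [|j IH]; intro H; [lia|].
  destruct (Nat.eq_dec i j) as [->|Hne]; [apply idx_S|].
  pose proof (idx_S c j). specialize (IH ltac:(lia)). lia.
Qed.

Lemma R_ray c : is_ray (cayley_edge op A) (R c).
Proof.
  split.
  - intros i j E. unfold R in E.
    destruct (Nat.lt_trichotomy i j) as [H|[H|H]]; auto; exfalso.
    + destruct (idx_lst c i) as [n En]. pose proof (idx_mono c i j H).
      destruct (lst_spec c n) as [H1 H2]. rewrite En in E.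
      specialize (H2 (idx c j)). rewrite <- H1 in H2.
      specialize (H2 (eq_sym E)). lia.
    + destruct (idx_lst c j) as [n En]. pose proof (idx_mono c j i H).
      destruct (lst_spec c n) as [H1 H2]. rewrite En in E.
      specialize (H2 (idx c i)). rewrite <- H1 in H2.
      specialize (H2 E). lia.
  - intro i. unfold R. simpl. destruct (lst_spec c (S (idx c i))) as [H1 _].
    rewrite H1. apply W_edge.
Qed.

Lemma R_image c v : image (R c) v -> image (W c) v.
Proof. intros [k <-]. exists (idx c k). reflexivity. Qed.

Lemma cone_chain (Q : Sg) x p : chain (cayley_edge op A) (x :: p) ->
  (exists s, x = op Q s) -> exists s, last (x :: p) x = op Q s.
Proof.
  revert x; induction p as [|y p IH]; intros x Hc [s Hs]; [exists s; auto|].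
  destruct Hc as [[a [_ Ha]] Hc].
  change (exists s0, last (y :: p) x = op Q s0).
  rewrite (last_default _ p y x y). apply IH; auto.
  exists (op s a). rewrite Ha, Hs, Hassoc; reflexivity.
Qed.

Lemma R_noneq c c' : c <> c' -> ~ preceq (cayley_edge op A) (image (R c)) (image (R c')).
Proof.
  intros Hcc [P [HP HD]].
  assert (Hex : exists k, c k <> c' k).
  { apply NNPP; intro Hn. apply Hcc. apply functional_extensionality; intro k.
    apply NNPP; intro Hk; apply Hn; eauto. }
  destruct Hex as [k0 Hk0]. destruct (min_exists (fun k => c k <> c' k) k0 Hk0) as [k [Hk Hmin]].
  assert (Hagree : forall i, i < k -> c i = c' i).
  { intros i Hi. apply NNPP; intro H. apply (Hmin i Hi H). }
  set (B := S k * L + 1).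
  destruct (avoid _ P HD (map (W c) (seq 0 B) ++ map (W c') (seq 0 B))) as [n Hn].
  destruct (HP n) as [[_ [_ HC]] Hp]. destruct (P n) as [|x p] eqn:EP; [contradiction|].
  destruct Hp as [Hx Hv].
  apply R_image in Hx. apply R_image in Hv.
  destruct Hx as [m Hm]. destruct Hv as [m' Hm'].
  assert (HmB : B <= m).
  { destruct (le_lt_dec B m); auto. exfalso. apply (Hn x); [left; auto|].
    apply in_or_app; left. rewrite <- Hm. apply in_map, in_seq. lia. }
  assert (HmB' : B <= m').
  { destruct (le_lt_dec B m'); auto. exfalso. apply (Hn (last (x :: p) x)); [apply last_In|].
    apply in_or_app; right. rewrite <- Hm'. apply in_map, in_seq. lia. }
  destruct (W_cone c k m HmB) as [s Hs].
  destruct (W_cone c' k m' HmB') as [s' Hs'].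
  destruct (cone_chain (op (W c (k * L)) (XV (c k))) x p HC) as [s'' Hs''].
  { exists s; rewrite <- Hm; auto. }
  rewrite <- Hm', Hs', <- (W_agree c c' k Hagree (k * L) (le_n _)) in Hs''.
  rewrite <- !Hassoc in Hs''. apply lc in Hs''.
  apply (XV_dis (c' k) (c k) (fun E => Hk (eq_sym E)) s' s''). exact Hs''.
Qed.

End Rays.

End RaysM.
Import RaysM.

Module OreM.

Section Ore.
Variable S : Type.
Variable op : S -> S -> S.
Hypothesis Hassoc : associative op.
Hypothesis Hcanc : cancellative op.
Hypothesis Hore : forall a b : S, exists x y, op a x = op b y.
Variable s0 : S.

Let lc : forall a x y, op a x = op a y -> x = y := proj1 Hcanc.
Let rc : forall a x y, op x a = op y a -> x = y := proj2 Hcanc.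

Definition cls (a b : S) : S -> S -> Prop :=
  fun x y => exists u v, op x u = op a v /\ op y u = op b v.

Lemma cls_refl a b : cls a b a b.
Proof. exists s0, s0; auto. Qed.

Lemma cls_sym a b x y : cls a b x y -> cls x y a b.
Proof. intros [u [v [H1 H2]]]; exists v, u; auto. Qed.

Lemma cls_trans a b c d e f : cls c d a b -> cls e f c d -> cls e f a b.
Proof.
  intros [u [v [H1 H2]]] [u' [v' [H3 H4]]].
  destruct (Hore v u') as [p [q Hpq]].
  exists (op u p), (op v' q); split.
  - rewrite Hassoc, H1, <- Hassoc, Hpq, Hassoc, H3, Hassoc; reflexivity.
  - rewrite Hassoc, H2, <- Hassoc, Hpq, Hassoc, H4, Hassoc; reflexivity.
Qed.

Lemma cls_eq a b x y : cls a b x y -> cls a b = cls x y.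
Proof.
  intro H. apply functional_extensionality; intro p.
  apply functional_extensionality; intro q.
  apply propositional_extensionality; split; intro H'.
  - eapply cls_trans; [exact H'|]. apply cls_sym; exact H.
  - eapply cls_trans; [exact H'| exact H].
Qed.

Definition M (R1 R2 : S -> S -> Prop) : S -> S -> Prop :=
  fun p q => exists s z, R1 (op p s) z /\ R2 z (op q s).

Lemma K a b c d X Y : op b X = op c Y ->
  M (cls a b) (cls c d) = cls (op a X) (op d Y).
Proof.
  intro HXY.
  apply functional_extensionality; intro p.
  apply functional_extensionality; intro q.
  apply propositional_extensionality; split.
  - intros [s [z [[u1 [v1 [H1 H2]]] [u2 [v2 [H3 H4]]]]]].
    destruct (Hore u1 u2) as [m [n Hmn]].
    assert (Hbc : op b (op v1 m) = op c (op v2 n)).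
    { rewrite Hassoc, <- H2, <- Hassoc, Hmn, Hassoc, H3, Hassoc. reflexivity. }
    destruct (Hore X (op v1 m)) as [al [be Hab]].
    assert (HY : op Y al = op (op v2 n) be).
    { apply (lc c).
      transitivity (op (op b X) al); [rewrite Hassoc, HXY; reflexivity|].
      transitivity (op (op b (op v1 m)) be); [rewrite <- (Hassoc b X al), Hab, (Hassoc b (op v1 m) be); reflexivity|].
      rewrite Hbc, <- Hassoc; reflexivity. }
    exists (op s (op u1 (op m be))), al; split.
    + rewrite <- (Hassoc a X), Hab, !Hassoc, H1, ?Hassoc; reflexivity.
    + rewrite <- (Hassoc d Y), HY, !Hassoc.
      rewrite <- (Hassoc (op q s) u1 m), Hmn, !Hassoc, H4, ?Hassoc; reflexivity.
  - intros [u [v [H1 H2]]].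
    exists u, (op (op b X) v); split.
    + exists u, (op (op X v) u); split.
      * rewrite H1, ?Hassoc; reflexivity.
      * rewrite !Hassoc; reflexivity.
    + exists u, (op (op Y v) u); split.
      * rewrite HXY, ?Hassoc; reflexivity.
      * rewrite H2, ?Hassoc; reflexivity.
Qed.

Lemma cls_scale a b t : cls (op a t) (op b t) = cls a b.
Proof.
  symmetry; apply cls_eq. exists t, (op t t); rewrite !Hassoc; auto.
Qed.

Lemma cls_diag a : cls a a = cls s0 s0.
Proof.
  symmetry; apply cls_eq. destruct (Hore a s0) as [x [y H]].
  exists x, y; auto.
Qed.

Definition I (R : S -> S -> Prop) : S -> S -> Prop := fun x y => R y x.

Lemma I_cls a b : I (cls a b) = cls b a.
Proof.
  apply functional_extensionality; intro p.
  apply functional_extensionality; intro q.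
  apply propositional_extensionality; unfold I, cls; split;
    intros [u [v [H1 H2]]]; exists u, v; auto.
Qed.

Definition G := {R : S -> S -> Prop | exists a b, R = cls a b}.

Lemma G_eq (g h : G) : proj1_sig g = proj1_sig h -> g = h.
Proof.
  destruct g as [g pg], h as [h ph]; simpl; intro E; subst.
  f_equal; apply proof_irrelevance.
Qed.

Lemma mG_ok (g h : G) : exists a b, M (proj1_sig g) (proj1_sig h) = cls a b.
Proof.
  destruct g as [g [a [b ->]]], h as [h [c [d ->]]]; simpl.
  destruct (Hore b c) as [x [y H]].
  exists (op a x), (op d y); apply K; auto.
Qed.

Definition mG (g h : G) : G := exist _ _ (mG_ok g h).
Definition eG : G := exist _ (cls s0 s0) (ex_intro _ s0 (ex_intro _ s0 eq_refl)).

Lemma iG_ok (g : G) : exists a b, I (proj1_sig g) = cls a b.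
Proof.
  destruct g as [g [a [b ->]]]; simpl. exists b, a; apply I_cls.
Qed.

Definition iG (g : G) : G := exist _ _ (iG_ok g).

Lemma G_group : is_group mG eG iG.
Proof.
  split; [|split].
  - intros [g [a [b Eg]]] [h [c [d Eh]]] [k [e [f Ek]]]; apply G_eq; simpl; subst.
    destruct (Hore b c) as [x [y H1]].
    destruct (Hore (op d y) e) as [x' [y' H2]].
    rewrite (K a b c d x y H1).
    rewrite (K (op a x) (op d y) e f x' y' H2).
    assert (H3 : op d (op y x') = op e y') by (rewrite Hassoc; auto).
    rewrite (K c d e f (op y x') y' H3).
    assert (H4 : op b (op (op x x') s0) = op (op c (op y x')) s0) by (rewrite !Hassoc, H1; auto).
    rewrite (K a b (op c (op y x')) (op f y') _ _ H4).
    rewrite !Hassoc, cls_scale; reflexivity.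
  - intros [g [a [b Eg]]]; split; apply G_eq; simpl; subst.
    + rewrite <- (cls_diag a). rewrite (K a a a b s0 s0 eq_refl). apply cls_scale.
    + rewrite <- (cls_diag b). rewrite (K a b b b s0 s0 eq_refl). apply cls_scale.
  - intros [g [a [b Eg]]]; split; apply G_eq; simpl; subst; rewrite I_cls.
    + rewrite (K b a a b s0 s0 eq_refl), cls_scale. apply cls_diag.
    + rewrite (K a b b a s0 s0 eq_refl), cls_scale. apply cls_diag.
Qed.

Definition phi (s : S) : G := exist _ (cls (op s s0) s0) (ex_intro _ _ (ex_intro _ _ eq_refl)).

Lemma phi_inj x y : phi x = phi y -> x = y.
Proof.
  intro E. apply (f_equal (@proj1_sig _ _)) in E; simpl in E.
  assert (H : cls (op y s0) s0 (op x s0) s0) by (rewrite <- E; apply cls_refl).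
  destruct H as [u [v [H1 H2]]].
  apply lc in H2; subst v.
  apply rc in H1. apply rc in H1. exact H1.
Qed.

Lemma phi_hom x y : phi (op x y) = mG (phi x) (phi y).
Proof.
  apply G_eq; simpl.
  destruct (Hore s0 (op y s0)) as [X [Y H]].
  rewrite (K (op x s0) s0 (op y s0) s0 X Y H).
  rewrite <- (Hassoc x s0 X), H, !Hassoc, cls_scale; reflexivity.
Qed.

Lemma ore_embeds : embeds_in_group op.
Proof.
  exists G, mG, eG, iG; split; [apply G_group|].
  exists phi; split; [apply phi_inj| apply phi_hom].
Qed.

End Ore.

End OreM.

Module MainM.

Section SB.
Variables (X Y : Type) (f : X -> Y) (g : Y -> X).
Hypothesis Hf : forall a b, f a = f b -> a = b.
Hypothesis Hg : forall a b, g a = g b -> a = b.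

Fixpoint it (n : nat) (x : X) : X := match n with 0 => x | S n => g (f (it n x)) end.

Definition C (x : X) : Prop := exists n x0, (forall y, g y <> x0) /\ x = it n x0.

Lemma notC_range x : ~ C x -> exists y, g y = x.
Proof.
  intro H. apply NNPP; intro H'. apply H. exists 0, x; split; auto.
  intros y Hy; apply H'; eauto.
Qed.

Definition h (x : X) : Y :=
  match excluded_middle_informative (C x) with
  | left _ => f x
  | right Hn => proj1_sig (constructive_indefinite_description _ (notC_range x Hn))
  end.

Lemma h_C x : C x -> h x = f x.
Proof. intro H; unfold h; destruct (excluded_middle_informative (C x)); [reflexivity|contradiction]. Qed.

Lemma h_nC x : ~ C x -> g (h x) = x.
Proof.
  intro H; unfold h; destruct (excluded_middle_informative (C x)); [tauto|].
  destruct (constructive_indefinite_description _ _); auto.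
Qed.

Lemma C_step x : C x -> C (g (f x)).
Proof. intros [n [x0 [H1 H2]]]. exists (S n), x0; split; auto. simpl; congruence. Qed.

Lemma h_inj a b : h a = h b -> a = b.
Proof.
  intro E.
  destruct (classic (C a)) as [Ca|Ca]; destruct (classic (C b)) as [Cb|Cb].
  - rewrite !h_C in E; auto.
  - exfalso. rewrite h_C in E by auto. apply Cb.
    rewrite <- (h_nC b Cb), <- E. apply C_step; auto.
  - exfalso. rewrite (h_C b) in E by auto. apply Ca.
    rewrite <- (h_nC a Ca), E. apply C_step; auto.
  - rewrite <- (h_nC a Ca), <- (h_nC b Cb), E; auto.
Qed.

Lemma h_surj y : exists x, h x = y.
Proof.
  destruct (classic (C (g y))) as [H|H].
  - destruct H as [n [x0 [H1 H2]]]. destruct n as [|m].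
    + exfalso; apply (H1 y); auto.
    + simpl in H2. apply Hg in H2. exists (it m x0).
      rewrite h_C; auto. exists m, x0; auto.
  - exists (g y). apply Hg. apply h_nC; auto.
Qed.
End SB.

Fixpoint lcode (l : list nat) : nat :=
  match l with [] => 0 | a :: l => S (Cantor.to_nat (a, lcode l)) end.

Lemma lcode_inj l l' : lcode l = lcode l' -> l = l'.
Proof.
  revert l'; induction l as [|a l IH]; intros [|a' l'] E; try discriminate; auto.
  change (S (Cantor.to_nat (a, lcode l)) = S (Cantor.to_nat (a', lcode l'))) in E.
  apply eq_add_S in E. apply Cantor.to_nat_inj in E. injection E as -> E.
  f_equal; auto.
Qed.

Section Final.
Variable T : Type.
Variable E : T -> T -> Prop.
Variable code : T -> nat.
Hypothesis Hcode : forall a b, code a = code b -> a = b.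
Variable Rr : (nat -> bool) -> nat -> T.
Hypothesis HRray : forall c, is_ray E (Rr c).
Hypothesis HRne : forall c c', c <> c' -> ~ preceq E (image (Rr c)) (image (Rr c')).

Definition valid (r : bool * (nat -> T)) := ray_or_antiray E r.

Lemma valid_inj r : valid r -> injective_seq (snd r).
Proof. unfold valid, ray_or_antiray; destruct (fst r); intros [H _]; auto. Qed.

Lemma valid_or r : valid r -> is_ray E (snd r) \/ is_anti_ray E (snd r).
Proof. unfold valid, ray_or_antiray; destruct (fst r); auto. Qed.

Lemma eq_refl' r : valid r -> end_equiv E r r.
Proof. intro H; split; apply preceq_refl_ray, valid_inj; auto. Qed.

Lemma eq_trans' r1 r2 r3 : valid r2 -> end_equiv E r1 r2 -> end_equiv E r2 r3 -> end_equiv E r1 r3.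
Proof.
  intros Hv [H1 H2] [H3 H4]; split.
  - eapply preceq_trans_ray; [apply valid_or, Hv|exact H1|exact H3].
  - eapply preceq_trans_ray; [apply valid_or, Hv|exact H4|exact H2].
Qed.

Definition cl (r : bool * (nat -> T)) := fun r' => valid r' /\ end_equiv E r r'.

Lemma cl_iff r r' : valid r -> valid r' -> (cl r = cl r' <-> end_equiv E r r').
Proof.
  intros Hv Hv'; split.
  - intro Hc. assert (H : cl r' r') by (split; auto; apply eq_refl'; auto).
    rewrite <- Hc in H. apply H.
  - intro H. apply functional_extensionality; intro q.
    apply propositional_extensionality; unfold cl; split; intros [Hq Hq']; split; auto.
    + eapply eq_trans'; [exact Hv| |exact Hq']. destruct H; split; auto.
    + eapply eq_trans'; [exact Hv'|exact H|exact Hq'].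
Qed.

Definition Q := {P : bool * (nat -> T) -> Prop | exists r, valid r /\ P = cl r}.

Lemma Q_eq (q q' : Q) : proj1_sig q = proj1_sig q' -> q = q'.
Proof.
  destruct q as [q pq], q' as [q' pq']; simpl; intro Eq; subst.
  f_equal; apply proof_irrelevance.
Qed.

Definition enc (r : bool * (nat -> T)) (k : nat) : bool :=
  match k with
  | 0 => fst r
  | S k' => let (n, m) := Cantor.of_nat k' in Nat.eqb (code (snd r n)) m
  end.

Lemma enc_inj r r' : enc r = enc r' -> r = r'.
Proof.
  destruct r as [b f], r' as [b' f']; intro H.
  assert (Hb : b = b') by (apply (f_equal (fun F => F 0)) in H; exact H).
  subst. f_equal. apply functional_extensionality; intro n.
  apply (f_equal (fun F => F (S (Cantor.to_nat (n, code (f n)))))) in H.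
  unfold enc in H. rewrite Cantor.cancel_of_to in H. simpl in H. rewrite Nat.eqb_refl in H.
  symmetry in H. apply Nat.eqb_eq in H. apply Hcode; auto.
Qed.

Definition rep (q : Q) : bool * (nat -> T) :=
  proj1_sig (constructive_indefinite_description _ (proj2_sig q)).

Lemma rep_spec q : valid (rep q) /\ proj1_sig q = cl (rep q).
Proof. unfold rep. destruct (constructive_indefinite_description _ _); auto. Qed.

Definition eQ (q : Q) := enc (rep q).

Lemma eQ_inj q q' : eQ q = eQ q' -> q = q'.
Proof.
  intro H. apply enc_inj in H. apply Q_eq.
  rewrite (proj2 (rep_spec q)), (proj2 (rep_spec q')), H; reflexivity.
Qed.

Lemma rayc_valid c : valid (true, Rr c).
Proof. exact (HRray c). Qed.

Definition gC (c : nat -> bool) : Q :=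
  exist _ (cl (true, Rr c)) (ex_intro _ _ (conj (rayc_valid c) eq_refl)).

Lemma gC_inj c c' : gC c = gC c' -> c = c'.
Proof.
  intro H. apply (f_equal (@proj1_sig _ _)) in H; simpl in H.
  apply cl_iff in H; try apply rayc_valid.
  apply NNPP; intro Hn. apply (HRne c c' Hn). apply H.
Qed.

Definition hh : Q -> (nat -> bool) := h Q (nat -> bool) eQ gC eQ_inj gC_inj.

Definition F (r : bool * (nat -> T)) : nat -> bool :=
  match excluded_middle_informative (valid r) with
  | left Hv => hh (exist _ (cl r) (ex_intro _ r (conj Hv eq_refl)))
  | right _ => fun _ => false
  end.

Lemma final : ends_card_continuum E.
Proof.
  exists F; split.
  - intro c. destruct (h_surj Q (nat -> bool) eQ gC eQ_inj gC_inj c) as [q Hq].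
    destruct q as [P [r [Hv EP]]]. exists r; split; [exact Hv|].
    unfold F. destruct (excluded_middle_informative (valid r)) as [Hv'|Hn]; [|contradiction].
    rewrite <- Hq. unfold hh. f_equal. apply Q_eq. simpl; auto.
  - intros r r' Hv Hv'. unfold F.
    destruct (excluded_middle_informative (valid r)) as [H1|H1]; [|contradiction].
    destruct (excluded_middle_informative (valid r')) as [H2|H2]; [|contradiction].
    rewrite <- (cl_iff r r' Hv Hv'). split.
    + intro H. apply h_inj in H.
      apply (f_equal (@proj1_sig _ _)) in H; exact H.
    + intro H. f_equal. apply Q_eq; exact H.
Qed.
End Final.

End MainM.
Import MainM.

Section Sem.
Variable S : Type.
Variable op : S -> S -> S.
Hypothesis Hassoc : associative op.
Variable A : list S.

Inductive Den : list nat -> S -> Prop :=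
| den1 i a : nth_error A i = Some a -> Den [i] a
| den2 i a l y : nth_error A i = Some a -> Den l y -> Den (i :: l) (op a y).

Lemma Den_fun l x : Den l x -> forall y, Den l y -> x = y.
Proof.
  induction 1 as [i a Ha|i a l y Ha Hl IH]; intros z Hz; inversion Hz; subst;
    try (match goal with H : Den [] _ |- _ => inversion H end).
  - congruence.
  - match goal with H : nth_error A i = Some ?a0, H' : Den l ?y0 |- _ =>
      rewrite Ha in H; injection H as <-; rewrite (IH y0 H'); reflexivity end.
Qed.

Lemma Den_app l1 x : Den l1 x -> forall l2 y, Den l2 y -> Den (l1 ++ l2) (op x y).
Proof.
  induction 1 as [i a Ha|i a l y Ha Hl IH]; intros l2 z Hz; simpl.
  - apply den2; auto.
  - rewrite <- Hassoc. apply den2; auto.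
Qed.

Lemma gen_Den x : generated op A x -> exists l, Den l x.
Proof.
  induction 1 as [a Ha|x y _ [l1 H1] _ [l2 H2]].
  - destruct (In_nth_error _ _ Ha) as [i Hi]. exists [i]; constructor; auto.
  - exists (l1 ++ l2); apply Den_app; auto.
Qed.

Lemma fold_op' w : forall z g, fold_left op w (op z g) = op z (fold_left op w g).
Proof.
  induction w as [|a w IH]; intros z g; simpl; auto.
  rewrite <- Hassoc. apply IH.
Qed.

Lemma fold_app' t v u t' : fold_left op (t ++ u :: t') v = op (fold_left op t v) (fold_left op t' u).
Proof. rewrite fold_left_app. simpl. apply fold_op'. Qed.

Lemma gen_word x : generated op A x ->
  exists u t, In u A /\ (forall g, In g t -> In g A) /\ x = fold_left op t u.
Proof.
  induction 1 as [a Ha|x y _ [u [t [Hu [Ht ->]]]] _ [u' [t' [Hu' [Ht' ->]]]]].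
  - exists a, []; split; [auto|split; [intros g []|reflexivity]].
  - exists u, (t ++ u' :: t'); split; [auto|split].
    + intros g Hg. apply in_app_or in Hg. destruct Hg as [Hg|[<-|Hg]]; auto.
    + rewrite fold_app'; auto.
Qed.
End Sem.

Theorem mainTheorem14 (S : Type) (op : S -> S -> S)
  (Hassoc : associative op) (Hcanc : cancellative op)
  (Hfg : finitely_generated op) (Hnemb : ~ embeds_in_group op)
  (A : list S) (HA : generates op A) :
  ends_card_continuum (cayley_edge op A).
Proof.
  destruct (classic (exists s : S, True)) as [[s0 _]|Hemp].
  2:{ exfalso. apply Hnemb. exists unit, (fun _ _ => tt), tt, (fun _ => tt).
      split.
      - split; [intros [] [] []; reflexivity|split; intros []; auto].
      - exists (fun _ => tt); split; [intros x; exfalso; apply Hemp; eauto|auto]. }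
  assert (Hab : exists a b, forall x y, op a x <> op b y).
  { apply NNPP; intro Hn. apply Hnemb. apply (OreM.ore_embeds S op Hassoc Hcanc); [|exact s0].
    intros a b. apply NNPP; intro H. apply Hn. exists a, b. intros x y E.
    apply H; eauto. }
  destruct Hab as [a [b Hab]].
  destruct (gen_word S op Hassoc A a (HA a)) as [ua [ta [Hua [Hta Ea]]]].
  destruct (gen_word S op Hassoc A b (HA b)) as [ub [tb [Hub [Htb Eb]]]].
  set (t1 := ta ++ ub :: tb). set (t2 := tb ++ ua :: ta).
  assert (Hlen : length t1 = length t2).
  { unfold t1, t2. rewrite !length_app; simpl; lia. }
  assert (HX1 : X1 S op ua t1 = op a b).
  { unfold X1, t1. rewrite fold_app', <- Ea, <- Eb; auto. }
  assert (HX2 : X2 S op ub t2 = op b a).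
  { unfold X2, t2. rewrite fold_app', <- Ea, <- Eb; auto. }
  assert (Hdis : forall s t, op (X1 S op ua t1) s <> op (X2 S op ub t2) t).
  { intros s t. rewrite HX1, HX2, <- !Hassoc. apply Hab. }
  assert (Ht1 : forall g, In g t1 -> In g A).
  { intros g Hg. unfold t1 in Hg. apply in_app_or in Hg. destruct Hg as [Hg|[<-|Hg]]; auto. }
  assert (Ht2 : forall g, In g t2 -> In g A).
  { intros g Hg. unfold t2 in Hg. apply in_app_or in Hg. destruct Hg as [Hg|[<-|Hg]]; auto. }
  set (code := fun x => lcode (proj1_sig (constructive_indefinite_description _ (gen_Den S op Hassoc A x (HA x))))).
  assert (Hcode : forall x y, code x = code y -> x = y).
  { intros x y E. unfold code in E.
    destruct (constructive_indefinite_description _ (gen_Den S op Hassoc A x (HA x))) as [l Hl].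
    destruct (constructive_indefinite_description _ (gen_Den S op Hassoc A y (HA y))) as [l' Hl'].
    simpl in E. apply lcode_inj in E. subst. eapply Den_fun; eauto. }
  apply (final S (cayley_edge op A) code Hcode (R S op Hassoc Hcanc ua ub t1 t2 Hlen Hdis)).
  - intro c. apply (R_ray S op Hassoc Hcanc A ua ub t1 t2 Hua Hub Ht1 Ht2).
  - intros c c' Hcc. apply (R_noneq S op Hassoc Hcanc A ua ub t1 t2 Hlen Hdis c c' Hcc).
Qed.
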